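(* Let $\Pi_q$ be a projective plane (not necessarily Desarguesian) of order $q$, let $\mu\ge 2$ be an integer and let $\delta=1/\sqrt{(q+1)\ln(q+1)}$. Assume that for some real $D\ge 1$ there exists in $\Pi_q$ a $(1,\mu-1)$-saturating set of size $k\le 2D\sqrt{(q+1)\ln(q+1)}+2$. Then there exists in $\Pi_q$ a $(1,\mu)$-saturating set of size \[ v\le 2\left(D+1+\frac{D+\delta}{q}+\delta\right)\sqrt{(q+1)\ln(q+1)}+2. \]
   Context: For an integer $m\ge1$, a point set $S\subset\Pi_q$ is $(1,m)$-saturating if for every point $Q\in\Pi_q\setminus S$ the number of secants of $S$ through $Q$, counted with multiplicity, is at least $m$, where a line $\ell$ meeting $S$ in at least two points is a secant and has multiplicity $\binom{\#(\ell\cap S)}{2}$. (A $(1,1)$-saturating set is a saturating set: every point outside $S$ is collinear with two points of $S$.) Here $\ln$ is the natural logarithm. *)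

(* Defs.v *)
From HB Require Import structures.
From mathcomp Require Import all_boot all_order all_algebra.
From mathcomp Require Import all_classical all_reals all_analysis.
Set Implicit Arguments. Unset Strict Implicit. Unset Printing Implicit Defensive.
Import Order.TTheory GRing.Theory Num.Theory.

Definition line_pts (P L : finType) (inc : P -> L -> bool) (l : L) : {set P} :=
  [set x | inc x l].

Definition is_projective_plane_of_order (P L : finType) (inc : P -> L -> bool)
    (q : nat) : Prop :=
  (forall x y : P, x != y -> exists! l : L, inc x l && inc y l) /\
  (forall l m : L, l != m -> exists! x : P, inc x l && inc x m) /\
  (* non-degeneracy: four points, no three collinear *)
  (exists a b c d : P, uniq [:: a; b; c; d] /\
     forall l : L, (inc a l + inc b l + inc c l + inc d l <= 2)%N) /\
  (forall l : L, #|line_pts inc l| = q.+1).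

Definition secant_count (P L : finType) (inc : P -> L -> bool)
    (S : {set P}) (Q : P) : nat :=
  \sum_(l : L | inc Q l && (2 <= #|line_pts inc l :&: S|)%N)
     'C(#|line_pts inc l :&: S|, 2).

Definition one_m_saturating (P L : finType) (inc : P -> L -> bool)
    (m : nat) (S : {set P}) : Prop :=
  forall Q : P, Q \notin S -> (m <= secant_count inc S Q)%N.

(* Main.v *)
Require Import Defs.
From HB Require Import structures.
From mathcomp Require Import all_boot all_order all_algebra.
From mathcomp Require Import all_classical all_reals all_analysis.
From mathcomp Require Import zify ring lra.
Import Order.TTheory GRing.Theory Num.Theory.
Set Implicit Arguments. Unset Strict Implicit.

Lemma card_bigcup_le (I T : finType) (A : {set I}) (F : I -> {set T}) :
  (#|\bigcup_(a in A) F a| <= \sum_(a in A) #|F a|)%N.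
Proof.
apply: (big_ind2 (fun (U : {set T}) n => #|U| <= n)%N) => //.
- by rewrite cards0.
- move=> U1 n1 U2 n2 h1 h2; apply: leq_trans (leq_card_setU _ _).1 _.
  exact: leq_add.
Qed.

Lemma card_bigcup_disj (I T : finType) (A : {set I}) (F : I -> {set T}) :
  {in A &, forall a b, a != b -> [disjoint F a & F b]} ->
  #|\bigcup_(a in A) F a| = (\sum_(a in A) #|F a|)%N.
Proof.
elim: {A}_.+1 {-2}A (ltnSn #|A|) => // n IH A hA hd.
have [->|[a aA]] := set_0Vmem A.
  by rewrite big_set0 cards0 big_set0.
rewrite (bigD1 a) //= (bigD1 a aA) /=.
have hA' : (#|A :\ a| < n)%N by rewrite (cardsD1 a A) aA add1n ltnS in hA.
have e1 : \bigcup_(i in A | i != a) F i = \bigcup_(i in A :\ a) F i.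
  by apply: eq_bigl => i; rewrite !inE andbC.
have e2 : (\sum_(i in A | i != a) #|F i| = \sum_(i in A :\ a) #|F i|)%N.
  by apply: eq_bigl => i; rewrite !inE andbC.
rewrite e1 e2 -IH //; last first.
  by move=> x y /setD1P[_ xA] /setD1P[_ yA]; apply: hd.
have dj : [disjoint F a & \bigcup_(i in A :\ a) F i].
  rewrite -setI_eq0; apply/eqP/setP => x; rewrite !inE.
  apply/andP => -[xa /bigcupP[i /setD1P[ia iA] xi]].
  have := hd a i aA iA; rewrite eq_sym ia => /(_ isT) /disjointFr /(_ xa).
  by rewrite xi.
by have := leq_card_setU (F a) (\bigcup_(i in A :\ a) F i); rewrite dj => -[_ /eqP].
Qed.



Lemma pl_join (P L : finType) (inc : P -> L -> bool) q :
  is_projective_plane_of_order inc q ->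
  forall x y, x != y -> exists l, inc x l && inc y l.
Proof. by move=> [h _] x y /h [l [hl _]]; exists l. Qed.

Lemma pl_uniq (P L : finType) (inc : P -> L -> bool) q :
  is_projective_plane_of_order inc q ->
  forall l m x y, l != m -> inc x l -> inc x m -> inc y l -> inc y m -> x = y.
Proof.
move=> [_ [h _]] l m x y /h [z [_ hz]] xl xm yl ym.
by rewrite -(hz x) ?xl ?xm // -(hz y) ?yl ?ym.
Qed.

Lemma pl_meet (P L : finType) (inc : P -> L -> bool) q :
  is_projective_plane_of_order inc q ->
  forall l m, l != m -> exists x, inc x l && inc x m.
Proof. by move=> [_ [h _]] l m /h [z [hz _]]; exists z. Qed.

Lemma pl_card (P L : finType) (inc : P -> L -> bool) q :
  is_projective_plane_of_order inc q -> forall l, #|line_pts inc l| = q.+1.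
Proof. by move=> [_ [_ [_ h]]]. Qed.

Lemma pl_q2 (P L : finType) (inc : P -> L -> bool) q :
  is_projective_plane_of_order inc q -> (2 <= q)%N.
Proof.
move=> hp; have [_ [_ [[a [b [c [d [hu hs]]]]] _]]] := hp.
have ab : a != b by apply: contraTneq hu => ->; rewrite /= !inE eqxx.
have ac : a != c by apply: contraTneq hu => ->; rewrite /= !inE eqxx ?orbT ?andbF.
have bc : b != c by apply: contraTneq hu => ->; rewrite /= !inE eqxx ?orbT ?andbF.
have cd : c != d by apply: contraTneq hu => ->; rewrite /= !inE eqxx ?orbT ?andbF.
have [l1 /andP[al1 bl1]] := pl_join hp ab.
have [l2 /andP[cl2 dl2]] := pl_join hp cd.
have l12 : l1 != l2.
  apply/eqP => e; have := hs l1; rewrite al1 bl1 e cl2 dl2; by [].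
have [e /andP[el1 el2]] := pl_meet hp l12.
have ea : e != a.
  apply/eqP => ee; have := hs l2; rewrite -ee el2 cl2 dl2; case: (inc b l2) => //.
have eb : e != b.
  apply/eqP => ee; have := hs l2; rewrite -ee el2 cl2 dl2; case: (inc a l2) => //.
have sub : e |: [set a; b] \subset line_pts inc l1.
  by apply/fintype.subsetP => x; rewrite !inE => /orP[|/orP[]] /eqP ->.
have := subset_leq_card sub; rewrite (pl_card hp) cardsU1 cards2 !inE ab.
by rewrite negb_or ea eb.
Qed.

Lemma pl_cardP (P L : finType) (inc : P -> L -> bool) q :
  is_projective_plane_of_order inc q -> (#|P| <= q * q + q + 1)%N.
Proof.
move=> hp; have [_ [_ [[a [b [c [d [hu hs]]]]] _]]] := hp.
have ab : a != b by apply: contraTneq hu => ->; rewrite /= !inE eqxx.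
have ac : a != c by apply: contraTneq hu => ->; rewrite /= !inE eqxx ?orbT ?andbF.
have bc : b != c by apply: contraTneq hu => ->; rewrite /= !inE eqxx ?orbT ?andbF.
have cd : c != d by apply: contraTneq hu => ->; rewrite /= !inE eqxx ?orbT ?andbF.
have [m /andP[bm cm]] := pl_join hp bc.
have am : ~~ inc a m.
  apply/negP => am; have := hs m; rewrite am bm cm; case: (inc d m) => //.
pose ly y := odflt m [pick l | inc a l && inc y l].
have lyP : forall y, y != a -> inc a (ly y) && inc y (ly y).
  move=> y ya; rewrite /ly; case: pickP => [l //|/= h].
  have [l hl] := pl_join hp (ya : y != a); rewrite eq_sym in ya.
  have [l' hl'] := pl_join hp ya; by have := h l'; rewrite hl'.
have cov : [set: P] \subset a |: \bigcup_(y in line_pts inc m) (line_pts inc (ly y) :\ a).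
  apply/fintype.subsetP => x _; rewrite !inE; have [->|xa] := eqVneq x a; first by [].
  apply/bigcupP.
  have [l /andP[al xl]] := pl_join hp (xa : x != a) ; move: al xl => xl al.
  have lm : l != m by apply: contraNneq am => <-.
  have [y /andP[yl ym]] := pl_meet hp lm.
  have ya : y != a by apply: contraNneq am => <-.
  have [aly yly] := andP (lyP y ya).
  exists y; first by rewrite inE.
  rewrite !inE xa /=.
  have [e|ne] := eqVneq l (ly y); first by rewrite -e.
  by have ay := pl_uniq hp ne al aly yl yly; rewrite ay eqxx in ya.
have := subset_leq_card cov; rewrite cardsT => h; apply: leq_trans h _.
rewrite cardsU1; apply: leq_trans (leq_add (leq_b1 _) (leqnn _)) _; rewrite addnC leq_add2r.
apply: leq_trans (card_bigcup_le _ _) _.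
rewrite (eq_bigr (fun _ => q)); last first.
  move=> y; rewrite inE => ym.
  have ya : y != a by apply: contraNneq am => <-.
  have [aly _] := andP (lyP y ya).
  by have := cardsD1 a (line_pts inc (ly y)); rewrite inE aly (pl_card hp) add1n => -[].
by rewrite sum_nat_const (pl_card hp) mulSn addnC.
Qed.


Definition coveredb (P L : finType) (inc : P -> L -> bool) (S A : {set P}) (Q : P) : bool :=
  [exists l, [&& inc Q l, [exists a in A, inc a l] &
                 (2 <= #|line_pts inc l :&: (S :|: A)|)%N]].

Definition unc (P L : finType) (inc : P -> L -> bool) (S A : {set P}) : {set P} :=
  [set Q | (Q \notin S :|: A) && ~~ coveredb inc S A Q].

Lemma secant_count_alt (P L : finType) (inc : P -> L -> bool) S Q :
  secant_count inc S Q = (\sum_(l | inc Q l) 'C(#|line_pts inc l :&: S|, 2))%N.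
Proof.
rewrite /secant_count big_mkcondr /=; apply: eq_bigr => l _.
by case: leqP => // h; rewrite bin_small.
Qed.

Lemma K1 (P L : finType) (inc : P -> L -> bool) m (S A : {set P}) :
  one_m_saturating inc m S -> [disjoint A & S] -> unc inc S A = finset.set0 ->
  one_m_saturating inc m.+1 (S :|: A).
Proof.
move=> hS dAS hU Q QV.
have QS : Q \notin S by apply: contra QV; rewrite inE => ->.
have hc : coveredb inc S A Q.
  case: (boolP (coveredb inc S A Q)) => // nc.
  have : Q \in unc inc S A by rewrite inE QV nc.
  by rewrite hU inE.
have [l0 /and3P[Ql0 /existsP[a /andP[aA al0]] h2]] := existsP hc.
have {}hS := hS Q QS.
apply: leq_ltn_trans hS _.
rewrite !secant_count_alt (bigD1 l0) //= [X in (_ < X)%N](bigD1 l0) //=.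
have sub : forall l, line_pts inc l :&: S \subset line_pts inc l :&: (S :|: A).
  by move=> l; apply: finset.setIS; apply: finset.subsetUl.
rewrite -addSn; apply: leq_add; last first.
  apply: leq_sum => l _; apply: leq_bin2l; exact: subset_leq_card.
have aS : a \notin S by rewrite (disjointFr dAS aA).
have lt : (#|line_pts inc l0 :&: S| < #|line_pts inc l0 :&: (S :|: A)|)%N.
  apply: proper_card; rewrite properE sub /=.
  apply/fintype.subsetPn; exists a; first by rewrite !inE al0 aA orbT.
  by rewrite !inE (negbTE aS) andbF.
move: lt h2; set s := #|_ :&: S|; set v := #|_ :&: (S :|: A)| => lt h2.
case: s lt => [|s] lt.
  by rewrite bin0n ltnNge leqn0 -lt0n bin_gt0.
apply: leq_trans (leq_bin2l 2 lt).
by rewrite [X in (_ < X)%N]binS bin1 -[X in (X < _)%N]addn0 ltn_add2l.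
Qed.

Definition covby (P L : finType) (inc : P -> L -> bool) (A : {set P}) (x Q : P) : bool :=
  (x != Q) && [exists l, [&& inc Q l, inc x l & [exists a in A, inc a l]]].

Lemma lower (P L : finType) (inc : P -> L -> bool) q (S A : {set P}) Q :
  is_projective_plane_of_order inc q -> Q \in unc inc S A ->
  (#|A| * q.-1 <= #|[set x | (x \notin S :|: A) && covby inc A x Q]|)%N.
Proof.
move=> hp; rewrite inE => /andP[QB nc].
have [->|[a0 a0A]] := set_0Vmem A; first by rewrite cards0.
have a0Q : a0 != Q by apply: contraNneq QB => <-; rewrite inE a0A orbT.
have [l0 _] := pl_join hp a0Q.
pose la a := odflt l0 [pick l | inc Q l && inc a l].
have laP : forall a, a \in A -> inc Q (la a) && inc a (la a).
  move=> a aA; rewrite /la; case: pickP => [l //|/= h].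
  have aQ : Q != a by apply: contraNneq QB => ->; rewrite inE aA orbT.
  have [l' hl'] := pl_join hp aQ; by have := h l'; rewrite hl'.
have key : forall a y, a \in A -> inc y (la a) -> y \in S :|: A -> y = a.
  move=> a y aA yl yB; apply/eqP; apply: contraNT nc => ya; rewrite inE in yB.
  have [Ql al] := andP (laP a aA).
  apply/existsP; exists (la a); rewrite Ql /=; apply/andP; split.
    by apply/existsP; exists a; rewrite aA al.
  have sub : [set y; a] \subset line_pts inc (la a) :&: (S :|: A).
    apply/fintype.subsetP => z; rewrite !inE => /orP[] /eqP ->.
      by rewrite yl yB.
    by rewrite al aA orbT.
  by have := subset_leq_card sub; rewrite cards2 ya.
pose X a := line_pts inc (la a) :\: (Q |: (S :|: A)).
have subX : \bigcup_(a in A) X a \subset [set x | (x \notin S :|: A) && covby inc A x Q].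
  apply/fintype.subsetP => x /bigcupP[a aA]; rewrite !inE => /andP[].
  rewrite negb_or => /andP[xQ xB] xl; rewrite xB /= /covby xQ /=.
  apply/existsP; exists (la a); have [Ql al] := andP (laP a aA); rewrite Ql xl /=.
  by apply/existsP; exists a; rewrite aA al.
apply: leq_trans (subset_leq_card subX).
rewrite card_bigcup_disj; last first.
  move=> a b aA bA ab; rewrite -setI_eq0; apply/eqP/setP => x; rewrite !inE.
  apply/negP => /andP[/andP[]]; rewrite negb_or => /andP[xQ xB] xa /andP[_ xb].
  have [e|ne] := eqVneq (la a) (la b).
    have [_ bl] := andP (laP b bA).
    have := key a b aA; rewrite e bl inE bA orbT => /(_ isT isT) ba.
    by rewrite ba eqxx in ab.
  have [Qa _] := andP (laP a aA); have [Qb _] := andP (laP b bA).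
  by have := pl_uniq hp ne xa xb Qa Qb; move=> xQ'; rewrite xQ' eqxx in xQ.
rewrite -sum_nat_const; apply: leq_sum => a aA.
rewrite /X cardsD (pl_card hp).
have sub2 : line_pts inc (la a) :&: (Q |: (S :|: A)) \subset [set Q; a].
  apply/fintype.subsetP => y; rewrite !inE => /andP[yl /orP[->//|yB]].
  by rewrite (key a y aA yl) ?eqxx ?orbT // inE.
have := subset_leq_card sub2; rewrite cards2.
move=> h; apply: leq_trans _ (leq_sub2l q.+1 h); case: (Q != a); case: (q) => // n; rewrite /= ?subSS ?subn0 ?leq_subr //; lia.
Qed.

Lemma card_sum (T : finType) (A : {set T}) (p : pred T) :
  #|[set x in A | p x]| = (\sum_(x in A) (p x : nat))%N.
Proof.
rewrite -sum1_card (eq_bigl (fun x => (x \in A) && p x)); last by move=> x; rewrite !inE.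
rewrite big_mkcondr /=; apply: eq_bigr => x _; by case: (p x).
Qed.

Lemma unc_sub (P L : finType) (inc : P -> L -> bool) (S A : {set P}) x :
  x \notin S :|: A ->
  unc inc S (x |: A) \subset unc inc S A :\: [set Q in unc inc S A | covby inc A x Q].
Proof.
move=> xB; apply/fintype.subsetP => Q; rewrite !inE negb_or => /andP[/andP[QS]].
rewrite negb_or => /andP[Qx QA] nc.
have ncA : ~~ coveredb inc S A Q.
  apply: contra nc => /existsP[l /and3P[Ql hA h2]].
  apply/existsP; exists l; rewrite Ql /=; apply/andP; split.
    by move: hA => /existsP[a /andP[aA al]]; apply/existsP; exists a; rewrite inE aA orbT al.
  apply: leq_trans h2 _; apply: subset_leq_card; apply: finset.setIS.
  by apply/fintype.subsetP => y; rewrite !inE => /orP[->|->]; rewrite ?orbT.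
rewrite (negbTE QS) (negbTE QA) ncA /= !andbT; apply: contra nc => /andP[_ /existsP[l /and3P[Ql xl /existsP[a /andP[aA al]]]]].
apply/existsP; exists l; rewrite Ql /=; apply/andP; split.
  by apply/existsP; exists x; rewrite setU11 xl.
have xa : x != a by apply: contraNneq xB => ->; rewrite inE aA orbT.
have sub : [set x; a] \subset line_pts inc l :&: (S :|: (x |: A)).
  apply/fintype.subsetP => z; rewrite !inE => /orP[] /eqP ->.
    by rewrite xl eqxx !orbT.
  by rewrite al aA !orbT.
by have := subset_leq_card sub; rewrite cards2 xa.
Qed.

Lemma step (P L : finType) (inc : P -> L -> bool) q (S A : {set P}) :
  is_projective_plane_of_order inc q -> unc inc S A != finset.set0 ->
  exists x, x \notin S :|: A /\
    (#|unc inc S (x |: A)| * #|P| + #|unc inc S A| * (#|A| * q.-1)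
       <= #|unc inc S A| * #|P|)%N.
Proof.
move=> hp /set0Pn [Q0 Q0U].
set U := unc inc S A.
pose C := ~: (S :|: A).
pose cov x := [set Q in U | covby inc A x Q].
have Q0C : Q0 \in C by move: Q0U; rewrite !inE => /andP[].
case: (@arg_maxnP _ Q0 (fun x => x \in C) (fun x => #|cov x|) Q0C) => xm xmC hmax.
have xmB : xm \notin S :|: A by move: xmC; rewrite inE.
exists xm; split => //.
have dc : (#|U| * (#|A| * q.-1) <= #|P| * #|cov xm|)%N.
  have e1 : (\sum_(Q in U) #|[set x | (x \notin S :|: A) && covby inc A x Q]|
             = \sum_(x in C) #|cov x|)%N.
    rewrite (eq_bigr (fun Q => \sum_(x in C) (covby inc A x Q : nat))%N); last first.
      move=> Q _; rewrite -card_sum; apply: eq_card => x; by rewrite !inE.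
    rewrite exchange_big /=; apply: eq_bigr => x _; by rewrite card_sum.
  have h1 : (#|U| * (#|A| * q.-1) <= \sum_(x in C) #|cov x|)%N.
    rewrite -e1 -sum_nat_const; apply: leq_sum => Q QU; exact: lower hp QU.
  apply: leq_trans h1 _.
  apply: leq_trans (_ : \sum_(x in C) #|cov xm| <= _)%N.
    by apply: leq_sum => x xC; exact: hmax.
  by rewrite sum_nat_const leq_mul2r max_card orbT.
have hsub := subset_leq_card (unc_sub inc xmB).
have covU : cov xm \subset U by apply/fintype.subsetP => Q; rewrite inE => /andP[].
rewrite cardsD (finset.setIidPr covU) in hsub.
have cle : (#|cov xm| <= #|U|)%N by exact: subset_leq_card covU.
set u' := #|unc inc S (xm |: A)| in hsub *.
set c := #|cov xm| in dc hsub cle.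
set n := (#|A| * q.-1)%N in dc *.
set M := #|P| in dc *.
set u := #|U| in dc hsub cle *.
nia.
Qed.

Local Open Scope ring_scope.

Lemma iter_greedy (R : realType) (P L : finType) (inc : P -> L -> bool) q (S : {set P}) :
  is_projective_plane_of_order inc q -> forall n : nat,
  exists A : {set P}, [disjoint A & S] /\ (#|A| <= n)%N /\
   (unc inc S A = finset.set0 \/ #|A| = n) /\
   (#|unc inc S A|%:R <= #|P|%:R *
      expR (- ((q.-1)%:R * (n%:R * (n%:R - 1)) / 2 / #|P|%:R)) :> R).
Proof.
move=> hp; elim=> [|n [A [dAS [An [hor hU]]]]].
  exists finset.set0; split; first by rewrite -setI_eq0 finset.set0I.
  split; first by rewrite cards0.
  split; first by right; rewrite cards0.
  rewrite !mul0r mulr0 !mul0r oppr0 expR0 mulr1 ler_nat; apply: max_card.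
have Mge0 : (0 : R) <= #|P|%:R by rewrite ler0n.
have [U0|Un0] := eqVneq (unc inc S A) finset.set0.
  exists A; split => //; split; first by apply: leq_trans An _.
  split; first by left.
  by rewrite U0 cards0 mulr_ge0 // expR_ge0.
case: hor => [U0|An']; first by rewrite U0 eqxx in Un0.
have [x [xB hx]] := step hp Un0.
have [Q0 _] := set0Pn _ Un0.
have Mgt0 : (0 : R) < #|P|%:R by rewrite ltr0n; apply/card_gt0P; exists Q0.
have xA : x \notin A by apply: contra xB; rewrite inE => ->; rewrite orbT.
have xS : x \notin S by apply: contra xB; rewrite inE => ->.
exists (x |: A); split.
  rewrite -setI_eq0; apply/eqP/setP => y; rewrite !inE.
  have [->|_] /= := eqVneq y x; first by rewrite (negbTE xS).
  by case yA: (y \in A); rewrite //= (disjointFr dAS yA).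
split; first by rewrite cardsU1 xA An'.
split; first by right; rewrite cardsU1 xA An'.
set M := #|P| in hx Mgt0 Mge0 *.
set u' := #|unc inc S (x |: A)| in hx *.
set u := #|unc inc S A| in hx hU *.
rewrite An' in hx.
have hxR : (u'%:R * M%:R + u%:R * (n%:R * (q.-1)%:R) <= u%:R * M%:R :> R).
  by rewrite -!natrM -natrD ler_nat.
have h1 : (u'%:R <= u%:R * (1 + (- (n%:R * (q.-1)%:R / M%:R))) :> R).
  have e : u%:R * (1 + (- (n%:R * (q.-1)%:R / M%:R))) =
     (u%:R * M%:R - u%:R * (n%:R * (q.-1)%:R)) / M%:R :> R.
    by field; rewrite gt_eqF.
  rewrite e ler_pdivlMr //; lra.
apply: (le_trans h1).
apply: le_trans (_ : u%:R * expR (- (n%:R * (q.-1)%:R / M%:R)) <= _).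
  by apply: ler_wpM2l; [rewrite ler0n | apply: expR_ge1Dx].
apply: le_trans (ler_wpM2r (expR_ge0 _) hU) _.
rewrite -[X in X <= _]mulrA -expRD; rewrite le_eqVlt; apply/orP; left; apply/eqP; congr (_ * expR _).
rewrite /M -natr1; field; rewrite gt_eqF //.
Qed.


Lemma poly_ineq (R : realType) (Q s y L : R) :
  2 <= Q -> 0 <= s -> 0 <= L -> s ^+ 2 = (Q + 1) * L -> y * Q = 2 * s + 2 ->
  (3 <= Q \/ s ^+ 2 <= 6) ->
  4 * (Q ^+ 2 + Q + 1) * L <= (Q - 1) * ((2 * s + 1 + y) * (2 * s + y)).
Proof.
move=> Q2 s0 L0 sL yQ h2.
have Qp : 0 < Q by lra.
have y0 : 0 <= y.
  have : 0 <= y * Q by rewrite yQ; lra.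
  by rewrite pmulr_lge0.
suff : 4 * (Q ^+ 2 + Q + 1) * L * ((Q + 1) * Q ^+ 2) <=
       (Q - 1) * ((2 * s + 1 + y) * (2 * s + y)) * ((Q + 1) * Q ^+ 2).
  by rewrite ler_pM2r //; apply: mulr_gt0; [lra | apply: exprn_gt0].
have e1 : 4 * (Q ^+ 2 + Q + 1) * L * ((Q + 1) * Q ^+ 2) =
          4 * Q ^+ 2 * (Q ^+ 2 + Q + 1) * s ^+ 2 by rewrite sL; ring.
have e2 : (Q - 1) * ((2 * s + 1 + y) * (2 * s + y)) * ((Q + 1) * Q ^+ 2) =
          (Q ^+ 2 - 1) * ((2 * s * Q + Q + 2 * s + 2) * (2 * s * Q + 2 * s + 2)).
  have -> : (2 * s * Q + Q + 2 * s + 2) = (2 * s + 1 + y) * Q by rewrite !mulrDl yQ; ring.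
  have -> : (2 * s * Q + 2 * s + 2) = (2 * s + y) * Q by rewrite !mulrDl yQ; ring.
  ring.
rewrite e1 e2.
rewrite -subr_ge0.
have -> : (Q ^+ 2 - 1) * ((2 * s * Q + Q + 2 * s + 2) * (2 * s * Q + 2 * s + 2)) -
   4 * Q ^+ 2 * (Q ^+ 2 + Q + 1) * s ^+ 2 =
   4 * s ^+ 2 * (Q ^+ 3 - Q ^+ 2 - 2 * Q - 1) +
   (Q ^+ 2 - 1) * (2 * s * (Q + 1) * (Q + 2) + 4 * s * (Q + 1)) +
   (Q ^+ 2 - 1) * (2 * (Q + 2)) by ring.
have hQ1 : 3 <= Q ^+ 2 - 1 by nra.
have hB : 0 <= (Q ^+ 2 - 1) * (2 * s * (Q + 1) * (Q + 2) + 4 * s * (Q + 1)).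
  apply: mulr_ge0; first lra.
  apply: addr_ge0; apply: mulr_ge0; try lra; apply: mulr_ge0; lra.
have hC : 24 <= (Q ^+ 2 - 1) * (2 * (Q + 2)) by nra.
have s20 : 0 <= s ^+ 2 by apply: sqr_ge0.
case: h2 => h2.
  have -> : Q ^+ 3 - Q ^+ 2 - 2 * Q - 1 = (Q - 3) * (Q ^+ 2 + 2 * Q + 4) + 11 by ring.
  have : 0 <= (Q - 3) * (Q ^+ 2 + 2 * Q + 4) by apply: mulr_ge0; nra.
  nra.
have -> : Q ^+ 3 - Q ^+ 2 - 2 * Q - 1 = (Q - 2) * (Q ^+ 2 + Q) - 1 by ring.
have : 0 <= (Q - 2) * (Q ^+ 2 + Q) by apply: mulr_ge0; nra.
nra.
Qed.

Lemma final_num (R : realType) (q M a : nat) :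
  (2 <= q)%N -> (0 < M)%N -> (M <= q * q + q + 1)%N ->
  2 * Num.sqrt (q.+1%:R * ln (q.+1%:R)) + 2 +
    (2 * Num.sqrt (q.+1%:R * ln (q.+1%:R)) + 2) / q%:R - 1 < a%:R :> R ->
  M%:R * expR (- ((q.-1)%:R * (a%:R * (a%:R - 1)) / 2 / M%:R)) < 1 :> R.
Proof.
move=> q2 M0 MN.
set s := Num.sqrt _.
set Q : R := q%:R.
have Q2 : 2 <= Q by rewrite /Q (ler_nat R 2 q).
have eQ1 : q.+1%:R = Q + 1 :> R by rewrite /Q -natr1.
set L := ln (q.+1%:R : R).
have L0 : 0 <= L by rewrite /L ln_ge0 // eQ1; lra.
have s0 : 0 <= s by apply: sqrtr_ge0.
have sL : s ^+ 2 = (Q + 1) * L.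
  by rewrite /s sqr_sqrtr -?eQ1 //; apply: mulr_ge0 => //; rewrite ler0n.
set y := (2 * s + 2) / Q.
have yQ : y * Q = 2 * s + 2 by rewrite /y divfK // gt_eqF //; lra.
have h3 : 3 <= Q \/ s ^+ 2 <= 6.
  case: (ltnP 2 q) => hq.
    by left; rewrite /Q (ler_nat R 3 q).
  right; have eq2 : q = 2%N by lia.
  rewrite sL /L eq2 /Q.
  have : ln (1 + 2) <= (2 : R) by apply: le_ln1Dx; lra.
  have -> : (1 + 2 : R) = 3%:R by [].
  by move=> h; rewrite eq2; lra.
have hp := @poly_ineq R Q s y L Q2 s0 L0 sL yQ h3.
move=> ha.
have eq1 : (q.-1)%:R = Q - 1 :> R by rewrite /Q -subn1 natrB // (leq_trans _ q2).
rewrite eq1.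
set t := 2 * s + 1 + y.
have ht : t < a%:R by rewrite /t; move: ha; rewrite -/y; lra.
have y0 : 0 <= y by rewrite /y; apply: divr_ge0; lra.
have t1 : 1 <= t by rewrite /t; lra.
have hat : t * (t - 1) < a%:R * (a%:R - 1) by nra.
have ht' : (2 * s + 1 + y) * (2 * s + y) = t * (t - 1) by rewrite /t; ring.
rewrite ht' in hp.
set N : R := Q ^+ 2 + Q + 1.
have Mpos : 0 < M%:R :> R by rewrite ltr0n.
have MN' : M%:R <= N.
  by rewrite /N /Q expr2; move: MN; rewrite -(ler_nat R) !natrD natrM.
have lnM : ln (M%:R : R) <= 2 * L.
  have : ln (M%:R : R) <= ln ((Q + 1) ^+ 2).
    rewrite ler_ln ?posrE //; last by apply: exprn_gt0; lra.
    by apply: le_trans MN' _; rewrite /N; nra.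
  by rewrite lnXn; [rewrite /L eQ1 mulr2n mulr_natl; lra | lra].
set E := (Q - 1) * (a%:R * (a%:R - 1)) / 2.
have hE : M%:R * ln (M%:R : R) < E.
  have h1 : M%:R * ln (M%:R : R) <= N * (2 * L).
    apply: le_trans (ler_wpM2l (ltW Mpos) lnM) _.
    by apply: ler_wpM2r => //; lra.
  apply: le_lt_trans h1 _.
  rewrite /E; have : 0 < Q - 1 by lra.
  move: hp; rewrite -/N => hp hQ.
  have : (Q - 1) * (t * (t - 1)) < (Q - 1) * (a%:R * (a%:R - 1)) by rewrite ltr_pM2l.
  lra.
have Mp : (M%:R : R) \is Num.pos by rewrite posrE.
rewrite -{1}(lnK Mp) -expRD expR_lt1.
have : ln (M%:R : R) < E / M%:R by rewrite ltr_pdivlMr // mulrC.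
move: (E / M%:R) => z; lra.
Qed.

Unset Implicit Arguments.

Theorem lemma1 (R : realType) (P L : finType) (inc : P -> L -> bool) (q : nat)
  (Hplane : is_projective_plane_of_order inc q)
  (mu : nat) (Hmu : (2 <= mu)%N) (D : R) (HD : 1 <= D) :
  (exists S : {set P}, one_m_saturating inc mu.-1 S /\
     (#|S|%:R <= 2 * D * Num.sqrt (q.+1%:R * ln (q.+1%:R)) + 2 :> R)) ->
  exists V : {set P}, one_m_saturating inc mu V /\
     (let delta : R := 1 / Num.sqrt (q.+1%:R * ln (q.+1%:R)) in
      #|V|%:R <= 2 * (D + 1 + (D + delta) / q%:R + delta)
                   * Num.sqrt (q.+1%:R * ln (q.+1%:R)) + 2).
Proof.
move=> [S [hS hk]].
have q2 := pl_q2 Hplane.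
set s := Num.sqrt _ in hk *.
set BT : R := 2 * s + 2 + (2 * s + 2) / q%:R.
have Qpos : (0 : R) < q%:R by rewrite ltr0n; lia.
have spos : 0 < s.
  rewrite /s sqrtr_gt0; apply: mulr_gt0; first by rewrite ltr0n.
  by apply: ln_gt0; rewrite ltr1n; lia.
have BT0 : 0 <= BT.
  rewrite /BT; have : 0 <= (2 * s + 2) / q%:R by apply: divr_ge0; lra.
  lra.
set a := Num.truncn BT.
have /andP[aBT BTa] := truncn_itv BT0.
have [A [dAS [Aa [_ hU]]]] := iter_greedy R S Hplane a.
have M0 : (0 < #|P|)%N.
  have [_ [_ [[x _] _]]] := Hplane; by apply/card_gt0P; exists x.
have hf := @final_num R q #|P| a q2 M0 (pl_cardP Hplane).
have hlt : (#|unc inc S A|%:R < 1 :> R).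
  apply: le_lt_trans hU (hf _); rewrite -/s -/BT.
  by move: BTa; rewrite -natr1; lra.
have U0 : unc inc S A = finset.set0.
  by apply/eqP; rewrite -cards_eq0; move: hlt; rewrite ltrn1 ltnS leqn0.
have mu1 : mu.-1.+1 = mu by rewrite prednK //; lia.
exists (S :|: A); split.
  by rewrite -mu1; apply: K1.
rewrite /=.
have hV : (#|S :|: A|%:R <= #|S|%:R + a%:R :> R).
  rewrite -natrD ler_nat; apply: leq_trans (leq_card_setU _ _).1 _.
  by rewrite leq_add2l.
have eR : 2 * (D + 1 + (D + 1 / s) / q%:R + 1 / s) * s + 2 =
          (2 * D * s + 2) + (2 * s + 2 + (2 * D * s + 2) / q%:R).
  by field; rewrite !gt_eqF.
rewrite eR.
have hd : (2 * s + 2) / q%:R <= (2 * D * s + 2) / q%:R.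
  apply: ler_wpM2r; first by rewrite invr_ge0; lra.
  nra.
move: aBT; rewrite /BT => aBT.
lra.
Qed.
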